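(* For each $n$ let $\rho^{(n)}$ be a state and $X^{(n)}=(X^{(n)}_1,\dots,X^{(n)}_d)$ observables on a finite-dimensional Hilbert space, let $W^{(n)}(\xi):=e^{\sqrt{-1}\xi^iX^{(n)}_i}$ for $\xi\in\mathbb R^d$, and assume $(X^{(n)},\rho^{(n)})\rightsquigarrow N(0,J)$ for a complex positive semidefinite $d\times d$ matrix $J$. Then, with $S:=\mathrm{Im}\,J$, $\lim_{n\to\infty}\big\|W^{(n)}(\xi)W^{(n)}(\eta)\sqrt{\rho^{(n)}}-e^{\sqrt{-1}\xi^\top S\eta}W^{(n)}(\xi+\eta)\sqrt{\rho^{(n)}}\big\|_{\mathrm{HS}}=0$ for all $\xi,\eta\in\mathbb R^d$, where $\|\cdot\|_{\mathrm{HS}}$ is the Hilbert–Schmidt norm.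
   Context: Summation convention. $N(0,J)$ is the quantum Gaussian state on $\mathrm{CCR}(\mathrm{Im}J)$ (generated by $e^{\sqrt{-1}\xi^iX_i}$ with $e^{\sqrt{-1}\xi^iX_i}e^{\sqrt{-1}\eta^jX_j}=e^{\sqrt{-1}\xi^\top(\mathrm{Im}J)\eta}e^{\sqrt{-1}(\xi+\eta)^iX_i}$) with $\phi(\prod_{t=1}^Te^{\sqrt{-1}\xi_t^iX_i})=\exp(-\tfrac12\sum_t\xi_t^i\xi_t^jJ_{ji}-\sum_{t<u}\xi_t^i\xi_u^jJ_{ji})$; $(X^{(n)},\rho^{(n)})\rightsquigarrow N(0,J)$ means $\mathrm{Tr}\,\rho^{(n)}\prod_te^{\sqrt{-1}\xi_t^iX^{(n)}_i}$ converges to these values for all $T$ and $\xi_1,\dots,\xi_T\in\mathbb R^d$. *)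

(* Defs.v *)
From HB Require Import structures.
From mathcomp Require Import all_boot all_order all_algebra.
From mathcomp Require Import all_classical all_reals all_analysis.
From mathcomp Require Import complex.
Set Implicit Arguments.
Unset Strict Implicit.
Unset Printing Implicit Defensive.
Import Order.TTheory GRing.Theory Num.Theory.
Import numFieldNormedType.Exports.
Local Open Scope classical_set_scope.
Local Open Scope ring_scope.

Section QDefs.
Variable R : realType.
Local Notation C := R[i].

Definition cvgC (u : nat -> C) (l : C) : Prop :=
  ((fun n => complex.Re (u n)) @ \oo --> complex.Re l) /\
  ((fun n => complex.Im (u n)) @ \oo --> complex.Im l).

Definition limC (u : nat -> C) : C :=
  Complex (limn (fun n => complex.Re (u n))) (limn (fun n => complex.Im (u n))).

Definition cexp (z : C) : C :=
  Complex (expR (complex.Re z) * cos (complex.Im z))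
          (expR (complex.Re z) * sin (complex.Im z)).

Definition expm n (A : 'M[C]_n) : 'M[C]_n :=
  \matrix_(i, j) limC (fun N => \sum_(k < N) (A ^+ k) i j / (k`!)%:R).

Definition adjmx m n (A : 'M[C]_(m, n)) : 'M[C]_(n, m) := (map_mx Num.conj A)^T.

Definition herm_mx n (A : 'M[C]_n) : Prop := adjmx A = A.

Definition psd_mx n (A : 'M[C]_n) : Prop :=
  herm_mx A /\ forall v : 'cV[C]_n, 0 <= (adjmx v *m A *m v) 0 0.

Definition is_state n (rho : 'M[C]_n) : Prop := psd_mx rho /\ \tr rho = 1.

Definition sqrtm n (A : 'M[C]_n) : 'M[C]_n :=
  xget 0 [set B : 'M[C]_n | psd_mx B /\ B *m B = A].

Definition hs_norm m n (A : 'M[C]_(m, n)) : R :=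
  Num.sqrt (\sum_i \sum_j ((complex.Re (A i j)) ^+ 2 + (complex.Im (A i j)) ^+ 2)).

Definition weyl n d (X : 'I_d -> 'M[C]_n) (xi : 'I_d -> R) : 'M[C]_n :=
  expm ('i%C *: \sum_(i < d) ((xi i)%:C)%C *: X i).

(** value phi(prod_t e^{sqrt(-1) xi_t^i X_i}) of the quantum Gaussian state N(0,J) *)
Definition gauss_char d (J : 'M[C]_d) T (xi : 'I_T -> 'I_d -> R) : C :=
  cexp (- (2%:R^-1) * \sum_(t < T) \sum_(i < d) \sum_(j < d)
                          ((xi t i)%:C)%C * ((xi t j)%:C)%C * J j i
        - \sum_(t < T) \sum_(u < T | (t < u)%N) \sum_(i < d) \sum_(j < d)
                          ((xi t i)%:C)%C * ((xi u j)%:C)%C * J j i).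

Definition qconv d (m : nat -> nat) (rho : forall n, 'M[C]_(m n))
  (X : forall n, 'I_d -> 'M[C]_(m n)) (J : 'M[C]_d) : Prop :=
  forall T (xi : 'I_T -> 'I_d -> R),
    cvgC (fun n => \tr (rho n *m \prod_(t < T) weyl (X n) (xi t))) (gauss_char J xi).

Definition immx d (J : 'M[C]_d) : 'M[R]_d := map_mx (@complex.Im R) J.

End QDefs.

(* Main.v *)
Require Import Defs.
From HB Require Import structures.
From mathcomp Require Import all_boot all_order all_algebra.
From mathcomp Require Import all_classical all_reals all_analysis.
From mathcomp Require Import complex.
From mathcomp Require Import ring.
Import Order.TTheory GRing.Theory Num.Theory.
Import numFieldNormedType.Exports.
Local Open Scope classical_set_scope.
Local Open Scope ring_scope.

Section Aux.
Variable R : realType.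
Local Notation C := R[i].

Lemma ReMc (x y : C) : complex.Re (x * y) = complex.Re x * complex.Re y - complex.Im x * complex.Im y.
Proof. by case: x => a b; case: y => c e. Qed.

Lemma ImMc (x y : C) : complex.Im (x * y) = complex.Re x * complex.Im y + complex.Im x * complex.Re y.
Proof. by case: x => a b; case: y => c e. Qed.

Lemma limnN (v : nat -> R) : limn (fun n => - v n) = - limn v.
Proof.
case: (pselect (cvgn v)) => h; first exact: (limN h).
have h' : ~ cvgn (fun n => - v n).
  move=> c; apply: h.
  have -> : v = (fun n => - (- v n)) by apply: funext => n; rewrite opprK.
  exact: (is_cvgN c).
rewrite (dvgP h) (dvgP h'). exact: (esym (oppr0 _)).
Qed.

Lemma conj_limC (u : nat -> C) : conjc (limC u) = limC (fun n => conjc (u n)).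
Proof.
rewrite /limC /=.
have -> : (fun n => complex.Re (conjc (u n))) = (fun n => complex.Re (u n)).
  by apply: funext => n; case: (u n).
have -> : (fun n => complex.Im (conjc (u n))) = (fun n => - complex.Im (u n)).
  by apply: funext => n; case: (u n).
by rewrite limnN.
Qed.

Lemma adjmxE m n (A : 'M[C]_(m, n)) i j : adjmx A i j = conjc (A j i).
Proof. by rewrite !mxE. Qed.

Lemma adjmxM m n p (A : 'M[C]_(m, n)) (B : 'M[C]_(n, p)) :
  adjmx (A *m B) = adjmx B *m adjmx A.
Proof.
apply/matrixP => i j; rewrite adjmxE !mxE rmorph_sum.
apply: eq_bigr => k _; rewrite rmorphM !adjmxE mulrC //.
Qed.

Lemma adjmxD m n (A B : 'M[C]_(m, n)) : adjmx (A + B) = adjmx A + adjmx B.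
Proof. by apply/matrixP => i j; rewrite !mxE rmorphD. Qed.

Lemma adjmxN m n (A : 'M[C]_(m, n)) : adjmx (- A) = - adjmx A.
Proof. by apply/matrixP => i j; rewrite !mxE rmorphN. Qed.

Lemma adjmxZ m n a (A : 'M[C]_(m, n)) : adjmx (a *: A) = conjc a *: adjmx A.
Proof. by apply/matrixP => i j; rewrite !mxE rmorphM. Qed.

Lemma adjmxK m n (A : 'M[C]_(m, n)) : adjmx (adjmx A) = A.
Proof. by apply/matrixP => i j; rewrite !adjmxE conjcK. Qed.

Lemma adjmxX n (A : 'M[C]_n) k : adjmx (A ^+ k) = adjmx A ^+ k.
Proof.
elim: k => [|k IH].
  rewrite !expr0; apply/matrixP => i j; rewrite adjmxE. by rewrite !mxE eq_sym rmorph_nat.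
by rewrite exprS exprSr adjmxM IH.
Qed.

Lemma adjmx_expm n (A : 'M[C]_n) : adjmx (expm A) = expm (adjmx A).
Proof.
apply/matrixP => i j; rewrite adjmxE /expm. rewrite [in LHS]mxE [in RHS]mxE conj_limC.
congr limC; apply: funext => N; rewrite rmorph_sum; apply: eq_bigr => k _.
by rewrite rmorphM (fmorphV conjc) rmorph_nat -adjmxX adjmxE.
Qed.
Lemma conjc_i : conjc ('i%C : C) = - 'i%C.
Proof. by apply/eqP; rewrite eq_complex /= oppr0 !eqxx. Qed.

Lemma conjc_real' (x : R) : conjc (x%:C%C : C) = x%:C%C.
Proof. by rewrite /= oppr0. Qed.

Lemma conjcM' (x y : C) : conjc (x * y) = conjc x * conjc y.
Proof. exact: rmorphM. Qed.
Lemma conjcD' (x y : C) : conjc (x + y) = conjc x + conjc y.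
Proof. exact: rmorphD. Qed.
Lemma conjcN' (x : C) : conjc (- x) = - conjc x.
Proof. exact: rmorphN. Qed.
Lemma conjc_sum' (I : finType) (F : I -> C) : conjc (\sum_i F i) = \sum_i conjc (F i).
Proof. exact: rmorph_sum. Qed.

Lemma weyl_adj n d (X : 'I_d -> 'M[C]_n) (xi : 'I_d -> R) :
  (forall i, herm_mx (X i)) -> adjmx (weyl X xi) = weyl X (fun i => - xi i).
Proof.
move=> hX; rewrite /weyl adjmx_expm; congr expm.
apply/matrixP => a b; rewrite adjmxE !mxE !summxE conjcM' conjc_sum' conjc_i mulNr -mulrN -sumrN.
congr (_ * _); apply: eq_bigr => k _; rewrite !mxE conjcM' conjc_real' raddfN mulNr.
congr (- (_ * _)). by move: (hX k) => /matrixP /(_ a b); rewrite adjmxE.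
Qed.

Lemma hs_norm_sq m (M : 'M[C]_m) : hs_norm M ^+ 2 = complex.Re (\tr (adjmx M *m M)).
Proof.
rewrite /hs_norm sqr_sqrtr; last first.
  by apply: sumr_ge0 => i _; apply: sumr_ge0 => j _; rewrite addr_ge0 // sqr_ge0.
symmetry.
rewrite /mxtrace raddf_sum (eq_bigr (fun a => \sum_b complex.Re (conjc (M b a) * M b a))); last first.
  by move=> a _; rewrite mxE raddf_sum; apply: eq_bigr => b _; rewrite adjmxE.
rewrite exchange_big /=; apply: eq_bigr => i _; apply: eq_bigr => j _.
rewrite ReMc; case: (M i j) => a b /=.
by rewrite mulNr opprK !expr2.
Qed.

Lemma sqrtm_cases m (A : 'M[C]_m) :
  (psd_mx (sqrtm A) /\ sqrtm A *m sqrtm A = A) \/ sqrtm A = 0.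
Proof.
rewrite /sqrtm; case: (pselect (exists B : 'M[C]_m, psd_mx B /\ B *m B = A)) => [[B hB]|h].
  by left; apply: (xgetPex 0 (P := [set B : 'M[C]_m | psd_mx B /\ B *m B = A])); exists B.
right; apply: xgetPN => x hx; apply: h; by exists x.
Qed.

Lemma hs_trace m (A B rho : 'M[C]_m) :
  psd_mx B -> B *m B = rho ->
  hs_norm (A *m B) ^+ 2 = complex.Re (\tr (rho *m (adjmx A *m A))).
Proof.
move=> [hB _] hBB; rewrite hs_norm_sq adjmxM hB -mulmxA.
rewrite (mxtrace_mulC B) -!mulmxA hBB.
by rewrite mulmxA (mxtrace_mulC _ rho).
Qed.
End Aux.

Section G.
Variable R : realType.
Local Notation C := R[i].
Variable d : nat.
Variable J : 'M[C]_d.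

Definition Bf (a b : 'I_d -> R) : C :=
  \sum_(i < d) \sum_(j < d) ((a i)%:C)%C * ((b j)%:C)%C * J j i.

Definition xsl (s : seq ('I_d -> R)) T : 'I_T -> 'I_d -> R :=
  fun t => nth (fun _ => 0) s t.

Lemma gauss4 a b c e : gauss_char J (xsl [:: a; b; c; e] 4) =
  cexp (- (2%:R^-1) * (Bf a a + Bf b b + Bf c c + Bf e e)
        - (Bf a b + Bf a c + Bf a e + Bf b c + Bf b e + Bf c e)).
Proof.
rewrite /gauss_char; congr cexp; congr (_ * _ - _).
  by rewrite !big_ord_recl big_ord0 /xsl /= /Bf ?addr0 ?addrA.
rewrite (eq_bigr (fun t : 'I_4 => \sum_(u < 4) if (t < u)%N then Bf (xsl [:: a; b; c; e] 4 t) (xsl [:: a; b; c; e] 4 u) else 0)); last by move=> t _; rewrite big_mkcond.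
rewrite !big_ord_recl !big_ord0 /xsl /bump /= /Bf.
by rewrite !add0r ?addr0 ?addrA.
Qed.


Lemma gauss3 a b c : gauss_char J (xsl [:: a; b; c] 3) =
  cexp (- (2%:R^-1) * (Bf a a + Bf b b + Bf c c) - (Bf a b + Bf a c + Bf b c)).
Proof.
rewrite /gauss_char; congr cexp; congr (_ * _ - _).
  by rewrite !big_ord_recl big_ord0 /xsl /= /Bf ?addr0 ?addrA.
rewrite (eq_bigr (fun t : 'I_3 => \sum_(u < 3) if (t < u)%N then Bf (xsl [:: a; b; c] 3 t) (xsl [:: a; b; c] 3 u) else 0)); last by move=> t _; rewrite big_mkcond.
rewrite !big_ord_recl !big_ord0 /xsl /bump /= /Bf.
by rewrite !add0r ?addr0 ?addrA.
Qed.

Lemma gauss2 a b : gauss_char J (xsl [:: a; b] 2) =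
  cexp (- (2%:R^-1) * (Bf a a + Bf b b) - Bf a b).
Proof.
rewrite /gauss_char; congr cexp; congr (_ * _ - _).
  by rewrite !big_ord_recl big_ord0 /xsl /= /Bf ?addr0 ?addrA.
rewrite (eq_bigr (fun t : 'I_2 => \sum_(u < 2) if (t < u)%N then Bf (xsl [:: a; b] 2 t) (xsl [:: a; b] 2 u) else 0)); last by move=> t _; rewrite big_mkcond.
rewrite !big_ord_recl !big_ord0 /xsl /bump /= /Bf.
by rewrite ?add0r ?addr0.
Qed.

Lemma BfNl a b : Bf (fun i => - a i) b = - Bf a b.
Proof.
rewrite /Bf -sumrN; apply: eq_bigr => i _; rewrite -sumrN; apply: eq_bigr => j _.
by rewrite raddfN /= !mulNr.
Qed.

Lemma BfNr a b : Bf a (fun i => - b i) = - Bf a b.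
Proof.
rewrite /Bf -sumrN; apply: eq_bigr => i _; rewrite -sumrN; apply: eq_bigr => j _.
by rewrite raddfN /= mulrN !mulNr.
Qed.

Lemma BfDl a b c : Bf (fun i => a i + b i) c = Bf a c + Bf b c.
Proof.
rewrite /Bf -big_split; apply: eq_bigr => i _; rewrite -big_split; apply: eq_bigr => j _.
by rewrite raddfD /= !mulrDl.
Qed.

Lemma BfDr a b c : Bf a (fun i => b i + c i) = Bf a b + Bf a c.
Proof.
rewrite /Bf -big_split; apply: eq_bigr => i _; rewrite -big_split; apply: eq_bigr => j _.
by rewrite raddfD /= mulrDr !mulrDl.
Qed.

Lemma BfUV a b : herm_mx J ->
  Bf a b - Bf b a = - ('i%C * ((\sum_(i < d) \sum_(j < d) a i * immx J i j * b j)%:C)%C)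
                   - ('i%C * ((\sum_(i < d) \sum_(j < d) a i * immx J i j * b j)%:C)%C).
Proof.
move=> hJ.
rewrite /Bf [X in _ - X = _]exchange_big /= -sumrB !raddf_sum !mulr_sumr -!sumrN -big_split /=.
apply: eq_bigr => i _; rewrite -sumrB !raddf_sum !mulr_sumr -!sumrN -big_split /=.
apply: eq_bigr => j _.
have hij : J i j = conjc (J j i) by move: hJ => /matrixP /(_ i j); rewrite adjmxE.
rewrite hij /immx mxE hij.
case: (J j i) => x y.
apply/eqP; rewrite /real_complex_def eq_complex /=; apply/andP; split; apply/eqP; ring.
Qed.

Lemma cexp0 : cexp (0 : C) = 1.
Proof. rewrite /cexp /= expR0 cos0 sin0 ?mul1r ?mulr0. by []. Qed.

Lemma cexp_i (th : R) : cexp ('i%C * (th%:C)%C) = Complex (cos th) (sin th).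
Proof. rewrite /cexp /real_complex_def /= ?mul0r ?mul1r ?mulr0 ?subr0 ?addr0 ?expR0 ?mul1r ?add0r. by []. Qed.

Lemma cexp_mi (th : R) : cexp (- ('i%C * (th%:C)%C)) = Complex (cos th) (- sin th).
Proof. rewrite /cexp /real_complex_def /= ?mul0r ?mul1r ?mulr0 ?subr0 ?addr0 ?oppr0 ?expR0 ?mul1r ?add0r ?cosN ?sinN. by []. Qed.

Lemma gvals (xi eta : 'I_d -> R) : herm_mx J ->
  let th := \sum_(i < d) \sum_(j < d) xi i * immx J i j * eta j in
  [/\ gauss_char J (xsl [:: (fun i => - eta i); (fun i => - xi i); xi; eta] 4) = 1,
      gauss_char J (xsl [:: (fun i => - eta i); (fun i => - xi i); (fun i => xi i + eta i)] 3)
        = Complex (cos th) (- sin th),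
      gauss_char J (xsl [:: (fun i => - (xi i + eta i)); xi; eta] 3) = Complex (cos th) (sin th) &
      gauss_char J (xsl [:: (fun i => - (xi i + eta i)); (fun i => xi i + eta i)] 2) = 1].
Proof.
move=> hJ th.
have h := BfUV xi eta hJ; rewrite -/th in h.
set w := 'i%C * (th%:C)%C in h.
have hU : Bf xi eta = Bf eta xi + (- w - w) by rewrite -h addrC subrK.
split.
- rewrite gauss4 !(BfNl, BfNr, BfDl, BfDr) hU.
  transitivity (@cexp R 0); last exact: cexp0.
  congr cexp; by field. 
- rewrite gauss3 !(BfNl, BfNr, BfDl, BfDr) hU.
  transitivity (cexp (- w)); last exact: cexp_mi.
  congr cexp; by field.
- rewrite gauss3 !(BfNl, BfNr, BfDl, BfDr) hU.
  transitivity (cexp w); last exact: cexp_i.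
  congr cexp; by field.
- rewrite gauss2 !(BfNl, BfNr, BfDl, BfDr) hU.
  transitivity (@cexp R 0); last exact: cexp0.
  congr cexp; by field.
Qed.
End G.

Section P.
Variable R : realType.
Local Notation C := R[i].

Lemma prod4g (T : pzSemiRingType) (f : 'I_4 -> T) :
  \prod_(t < 4) f t = f ord0 * f (lift ord0 ord0) * f (lift ord0 (lift ord0 ord0)) * f (lift ord0 (lift ord0 (lift ord0 ord0))).
Proof. by rewrite !big_ord_recl big_ord0 mulr1 !mulrA. Qed.
Lemma prod3g (T : pzSemiRingType) (f : 'I_3 -> T) :
  \prod_(t < 3) f t = f ord0 * f (lift ord0 ord0) * f (lift ord0 (lift ord0 ord0)).
Proof. by rewrite !big_ord_recl big_ord0 mulr1 !mulrA. Qed.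
Lemma prod2g (T : pzSemiRingType) (f : 'I_2 -> T) :
  \prod_(t < 2) f t = f ord0 * f (lift ord0 ord0).
Proof. by rewrite !big_ord_recl big_ord0 mulr1. Qed.

Lemma prod4 n d (X : 'I_d -> 'M[C]_n) a b c e :
  \prod_(t < 4) weyl X (xsl R d [:: a; b; c; e] 4 t) = weyl X a * weyl X b * weyl X c * weyl X e.
Proof. rewrite prod4g. reflexivity. Qed.

Lemma prod3 n d (X : 'I_d -> 'M[C]_n) a b c :
  \prod_(t < 3) weyl X (xsl R d [:: a; b; c] 3 t) = weyl X a * weyl X b * weyl X c.
Proof. rewrite ?prod3g ?prod2g. reflexivity. Qed.

Lemma prod2 n d (X : 'I_d -> 'M[C]_n) a b :
  \prod_(t < 2) weyl X (xsl R d [:: a; b] 2 t) = weyl X a * weyl X b.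
Proof. rewrite ?prod3g ?prod2g. reflexivity. Qed.

Lemma hs_norm0 m : hs_norm (0 : 'M[C]_m) = 0.
Proof.
rewrite /hs_norm (eq_bigr (fun _ => 0)) ?big1 ?sqrtr0 // => i _.
by rewrite big1 // => j _; rewrite mxE /= expr0n /= addr0.
Qed.

Lemma cvgC_Re (u : nat -> C) (l a : C) : cvgC u l ->
  (fun n => complex.Re (a * u n)) @ \oo --> complex.Re (a * l).
Proof.
move=> [h1 h2].
have -> : (fun n => complex.Re (a * u n)) = (fun n => complex.Re a * complex.Re (u n) - complex.Im a * complex.Im (u n)).
  by apply: funext => n /=; rewrite ReMc.
rewrite (ReMc _ a l); apply: cvgB; exact: cvgMl_tmp.
Qed.

End P.

Lemma alg_expand (R : realType) m (r a1 a2 b1 b2 q s : 'M[R[i]]_m) (c cb : R[i]) : cb * c = 1 ->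
 r *m ((a1 *m a2 - cb *: q) *m (b1 *m b2 - c *: s)) =
   r *m (a1 *m a2 *m b1 *m b2) - c *: (r *m (a1 *m a2 *m s))
   - cb *: (r *m (q *m b1 *m b2)) + r *m (q *m s).
Proof.
move=> h.
rewrite mulmxBl !mulmxBr -!scalemxAl -!scalemxAr scalerA h scale1r !mulmxA.
by rewrite opprB addrA addrAC.
Qed.

Lemma tr_lin (R : realType) m (P Q S U : 'M[R[i]]_m) (c cb : R[i]) :
  complex.Re (\tr (P - c *: Q - cb *: S + U)) =
  complex.Re (\tr P) - complex.Re (c * \tr Q) - complex.Re (cb * \tr S) + complex.Re (\tr U).
Proof. by rewrite !raddfD /= !raddfN /= !mxtraceZ. Qed.

Theorem lemma7 (R : realType) (d : nat) (m : nat -> nat)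
  (rho : forall n, 'M[R[i]]_(m n)) (X : forall n, 'I_d -> 'M[R[i]]_(m n))
  (J : 'M[R[i]]_d) :
  (forall n, is_state (rho n)) ->
  (forall n i, herm_mx (X n i)) ->
  psd_mx J ->
  qconv rho X J ->
  forall xi eta : 'I_d -> R,
    (fun n => hs_norm (weyl (X n) xi * weyl (X n) eta * sqrtm (rho n)
       - cexp ('i%C * ((\sum_(i < d) \sum_(j < d) xi i * immx J i j * eta j)%:C)%C)
           *: (weyl (X n) (fun i => xi i + eta i) * sqrtm (rho n))))
    @ \oo --> (0 : R).
Proof.
move=> hrho hX [hJ _] hconv xi eta.
set th := \sum_(i < d) \sum_(j < d) xi i * immx J i j * eta j.
have := gvals _ _ J xi eta hJ; rewrite /= -/th => -[g1 g2 g3 g4].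
set c := cexp ('i%C * (th%:C)%C).
have hc : c = Complex (cos th) (sin th) by exact: cexp_i.
set cb := Complex (cos th) (- sin th).
have hcc : conjc c = cb by rewrite hc.
have hcbc : cb * c = 1.
  rewrite hc /cb; apply/eqP; rewrite eq_complex /=; apply/andP; split; apply/eqP.
    by rewrite mulNr opprK -!expr2 cos2Dsin2.
  by rewrite mulNr (mulrC (sin th)) subrr.
set mxi := (fun i => - xi i). set meta := (fun i => - eta i).
set s := (fun i => xi i + eta i). set ms := (fun i => - (xi i + eta i)).
pose t1 n := \tr (rho n *m (weyl (X n) meta *m weyl (X n) mxi *m weyl (X n) xi *m weyl (X n) eta)).
pose t2 n := \tr (rho n *m (weyl (X n) meta *m weyl (X n) mxi *m weyl (X n) s)).
pose t3 n := \tr (rho n *m (weyl (X n) ms *m weyl (X n) xi *m weyl (X n) eta)).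
pose t4 n := \tr (rho n *m (weyl (X n) ms *m weyl (X n) s)).
have h1 : cvgC t1 1.
  have e : t1 = (fun n => \tr (rho n *m \prod_(t < 4) weyl (X n) (xsl R d [:: meta; mxi; xi; eta] 4 t))).
    by apply: funext => n; rewrite prod4.
  by rewrite e -g1; exact: hconv.
have h2 : cvgC t2 cb.
  have e : t2 = (fun n => \tr (rho n *m \prod_(t < 3) weyl (X n) (xsl R d [:: meta; mxi; s] 3 t))).
    by apply: funext => n; rewrite prod3.
  by rewrite e /cb -g2; exact: hconv.
have h3 : cvgC t3 c.
  have e : t3 = (fun n => \tr (rho n *m \prod_(t < 3) weyl (X n) (xsl R d [:: ms; xi; eta] 3 t))).
    by apply: funext => n; rewrite prod3.
  by rewrite e hc -g3; exact: hconv.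
have h4 : cvgC t4 1.
  have e : t4 = (fun n => \tr (rho n *m \prod_(t < 2) weyl (X n) (xsl R d [:: ms; s] 2 t))).
    by apply: funext => n; rewrite prod2.
  by rewrite e -g4; exact: hconv.
pose ff n := complex.Re (t1 n) - complex.Re (c * t2 n) - complex.Re (cb * t3 n) + complex.Re (t4 n).
have hf : ff n @[n --> \oo] --> (0:R).
  have -> : (0:R) = complex.Re (1:R[i]) - complex.Re (c * cb) - complex.Re (cb * c) + complex.Re (1:R[i]).
    by rewrite mulrC hcbc /= subrr sub0r addNr.
  apply: cvgD; first apply: cvgB; first apply: cvgB.
  - exact: h1.1.
  - exact: cvgC_Re.
  - exact: cvgC_Re.
  - exact: h4.1.
apply: (squeeze_cvgr (f := fun _ => 0) (h := fun n => Num.sqrt `|ff n|)).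
- apply: nearW => n.
  set B := sqrtm (rho n).
  set A := weyl (X n) xi *m weyl (X n) eta - c *: weyl (X n) s.
  have E : weyl (X n) xi * weyl (X n) eta * B - c *: (weyl (X n) s * B) = A *m B.
    by rewrite /A mulmxBl -scalemxAl.
  rewrite E.
  apply/andP; split; first exact: sqrtr_ge0.
  case: (sqrtm_cases _ _ (rho n)) => [[hB hBB]|h0]; last first.
    by rewrite /B h0 mulmx0 hs_norm0 sqrtr_ge0.
  have hsq : hs_norm (A *m B) ^+ 2 = ff n.
    rewrite (hs_trace _ _ A B (rho n) hB hBB).
    have hadj : adjmx A = weyl (X n) meta *m weyl (X n) mxi - cb *: weyl (X n) ms.
      rewrite /A. rewrite adjmxD. rewrite adjmxN. rewrite adjmxZ. rewrite adjmxM. congr (_ *m _ - _ *: _).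
      - exact: (weyl_adj _ _ _ (X n) eta (hX n)).
      - exact: (weyl_adj _ _ _ (X n) xi (hX n)).
      - exact: hcc.
      - exact: (weyl_adj _ _ _ (X n) s (hX n)).

    rewrite hadj /A (alg_expand _ _ _ _ _ _ _ _ _ _ _ hcbc).
   
    rewrite tr_lin. by [].
  have hge : 0 <= hs_norm (A *m B) by exact: sqrtr_ge0.
  rewrite -(ger0_norm hge) -sqrtr_sqr hsq.
  by apply: ler_wsqrtr; exact: ler_norm.
- exact: cvg_cst.
- have := cvg_comp _ _ (cvg_norm hf) (@sqrt_continuous R `|0|).
  rewrite normr0 sqrtr0 => H. exact: H.
Qed.
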